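(* Let $\lambda>0$ and set $\Lambda=-3\lambda$. Let $m,a,q\in\mathbb{R}$ be parameters with $\lambda a^2<1$, put $\Xi=1-\lambda a^2>0$ and $$\Delta_r=(r^2+a^2)(1+\lambda r^2)-2mr+q^2 .$$ Assume that the Kerr-Newman-anti-de Sitter solution with these parameters is a black hole, i.e. that the quartic $\Delta_r$ has real zeros, namely either two distinct real zeros $r_1<r_2$ or one real double zero $r_1=r_2$. Define the angular momentum $J=ma/\Xi^2$, the electric charge $Q=q/\Xi$, and the reduced areas of the Cauchy and event horizons $$\bar A_{\mathrm C}=\frac{r_1^2+a^2}{\Xi},\qquad \bar A_{\mathrm E}=\frac{r_2^2+a^2}{\Xi}.$$ The actual horizon areas are $A_{\mathrm C}=4\pi\bar A_{\mathrm C}$ and $A_{\mathrm E}=4\pi\bar A_{\mathrm E}$. Then $$4J^2+Q^4=\bar A_{\mathrm C}\bar A_{\mathrm E}\Big[1+2\lambda\big(\bar A_{\mathrm C}+\bar A_{\mathrm E}+Q^2\big)+\lambda^2\big(\bar A_{\mathrm C}^2+\bar A_{\mathrm C}\bar A_{\mathrm E}+\bar A_{\mathrm E}^2\big)\Big].$$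
   Context: The Kerr-Newman-anti-de Sitter (KN-AdS) solution with cosmological constant $\Lambda=-3\lambda<0$ is written in Boyer-Lindquist-type coordinates $(r,\theta,\phi,t)$ as $$\mathrm ds^2=\varrho^2\Big(\frac{\mathrm dr^2}{\Delta_r}+\frac{\mathrm d\theta^2}{\Delta_\theta}\Big)+\frac{\Delta_\theta\sin^2\theta}{\Xi^2\varrho^2}\big[a\,\mathrm dt-(r^2+a^2)\,\mathrm d\phi\big]^2-\frac{\Delta_r}{\Xi^2\varrho^2}\big(\mathrm dt-a\sin^2\theta\,\mathrm d\phi\big)^2 .$$ Here $\varrho^2=r^2+a^2\cos^2\theta$ and $\Delta_\theta=1-\lambda a^2\cos^2\theta$. The electromagnetic potential is $A=-\frac{qr}{\varrho^2}(\mathrm dt-a\sin^2\theta\,\mathrm d\phi)$. The parameter $m$ is the mass parameter, $a$ the rotation parameter and $q$ the charge parameter. The mass is $M=m/\Xi^2$. For $\lambda>0$ the quartic $\Delta_r$ has at most two real zeros. The larger zero $r_2$ gives the event horizon and the smaller zero $r_1$ gives the Cauchy horizon. The black hole is degenerate exactly when $r_1=r_2$. *)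

(* Defs.v *)
(* the statement is pure algebra over an arbitrary real field. *)
From HB Require Import structures.
From mathcomp Require Import all_boot all_order all_algebra.
Set Implicit Arguments. Unset Strict Implicit. Unset Printing Implicit Defensive.
Import Order.TTheory GRing.Theory Num.Theory.
Local Open Scope ring_scope.

Definition DeltaR {R : realFieldType} (lam a m q : R) : {poly R} :=
  ('X^2 + (a ^+ 2)%:P) * (1 + lam%:P * 'X^2) - (2 * m)%:P * 'X + (q ^+ 2)%:P.

Definition Xi {R : realFieldType} (lam a : R) : R := 1 - lam * a ^+ 2.

Definition AngJ {R : realFieldType} (lam a m : R) : R := m * a / (Xi lam a) ^+ 2.

Definition ChargeQ {R : realFieldType} (lam a q : R) : R := q / Xi lam a.

Definition Abar {R : realFieldType} (lam a r : R) : R := (r ^+ 2 + a ^+ 2) / Xi lam a.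

(* Main.v *)
Require Import Defs.
From HB Require Import structures.
From mathcomp Require Import all_boot all_order all_algebra.
From mathcomp Require Import ring lra.
Import Order.TTheory GRing.Theory Num.Theory.
Local Open Scope ring_scope.

Lemma key (R : realFieldType) (lam m a q r1 r2 : R) :
  lam * a ^+ 2 < 1 ->
  2 * m = (r1 + r2) * (lam * (r1^+2 + r2^+2) + 1 + lam * a^+2) ->
  q ^+ 2 = - (lam * r1^+4 + (1 + lam * a^+2) * r1^+2 - 2 * m * r1 + a^+2) ->
  let AC := Abar lam a r1 in
  let AE := Abar lam a r2 in
  let J := AngJ lam a m in
  let Q := ChargeQ lam a q in
  4 * J ^+ 2 + Q ^+ 4 =
    AC * AE * (1 + 2 * lam * (AC + AE + Q ^+ 2)
               + lam ^+ 2 * (AC ^+ 2 + AC * AE + AE ^+ 2)).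
Proof.
move=> hx hm hq AC AE J Q.
have hX : Xi lam a != 0 by rewrite /Xi subr_eq0 eq_sym lt_eqF.
have hm' : m = (r1 + r2) * (lam * (r1^+2 + r2^+2) + 1 + lam * a^+2) / 2.
  by rewrite -hm; field.
have hq4 : q ^+ 4 = (q ^+ 2) ^+ 2 by rewrite -exprM.
rewrite /AC /AE /J /Q /Abar /AngJ /ChargeQ !expr_div_n hq4 hq hm'.
move: hX; rewrite /Xi => hX.
by field.
Qed.

Theorem mainTheorem1 (R : realFieldType) (lam m a q r1 r2 : R) :
  0 < lam -> lam * a ^+ 2 < 1 ->
  (* black hole: r1 <= r2 are the real zeros of Delta_r (Cauchy and event horizons) *)
  r1 <= r2 ->
  root (DeltaR lam a m q) r1 -> root (DeltaR lam a m q) r2 ->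
  (forall r : R, root (DeltaR lam a m q) r -> r = r1 \/ r = r2) ->
  (* in the degenerate case r1 = r2 the zero is double *)
  (r1 = r2 -> root (DeltaR lam a m q)^`() r1) ->
  let AC := Abar lam a r1 in
  let AE := Abar lam a r2 in
  let J := AngJ lam a m in
  let Q := ChargeQ lam a q in
  4 * J ^+ 2 + Q ^+ 4 =
    AC * AE * (1 + 2 * lam * (AC + AE + Q ^+ 2)
               + lam ^+ 2 * (AC ^+ 2 + AC * AE + AE ^+ 2)).
Proof.
move=> hl hx _ h1 h2 _ hd.
have E : forall r, root (DeltaR lam a m q) r ->
  lam * r^+4 + (1 + lam * a^+2) * r^+2 - 2 * m * r + a^+2 + q^+2 = 0.
  move=> r /eqP H; rewrite /DeltaR !hornerE in H.
  have H' : (r ^+ 2 + a ^+ 2) * (1 + lam * r * r) - 2 * m * r + q ^+ 2 = 0 := H.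
  rewrite -H'; ring.
have E1 := E _ h1; have E2 := E _ h2.
apply: key => //; last first.
  apply/eqP; rewrite -subr_eq0 opprK; apply/eqP; rewrite -E1; ring.
case: (eqVneq r1 r2) => [e|ne].
  have := hd e; subst r2; move/eqP => H; rewrite /DeltaR !derivE !hornerE in H.
  have H' : (r1 + r1) * (1 + lam * r1 * r1) + (r1 ^+ 2 + a ^+ 2) * lam * (r1 + r1) - 2 * m = 0 := H.
  apply/eqP; rewrite -subr_eq0 -oppr_eq0; apply/eqP; rewrite -H'; ring.
apply: (mulfI (_ : r1 - r2 != 0)); first by rewrite subr_eq0.
have -> : (r1 - r2) * (2 * m) = (r1 - r2) * ((r1 + r2) * (lam * (r1^+2 + r2^+2) + 1 + lam * a^+2))
   - ((lam * r1^+4 + (1 + lam * a^+2) * r1^+2 - 2 * m * r1 + a^+2 + q^+2)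
     - (lam * r2^+4 + (1 + lam * a^+2) * r2^+2 - 2 * m * r2 + a^+2 + q^+2)) by ring.
by rewrite E1 E2 subrr subr0.
Qed.
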